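(* Fix $g\in\{0,1\}$ and a maximal lag $p\in\mathbb{N}$. Suppose that there exists at least one lag $h\in\{0,\dots,p\}$ with $\|\mathcal{R}_h\|_{\mathcal{S}}>0$, and that $E\|X_k^{(g')}\|^4<\infty$ for $g'=0,1$. Let $Y_1,\dots,Y_{p+1}$ be consecutive functions from group $\Pi_g$, and classify them with the oracle classifier (built from the true operators $\kappa^{(h)}_{g'}$ and the true discriminative feature functions $\nu_{h,j}$, with fixed dimensions $d_h$ and weights $W(h)>0$). Then the misclassification probability satisfies $$P\big(\Pi_{1-g}\,\big|\,\Pi_g,\{\nu_{h,j}\colon h\ge0,j\ge1\}\big)\le \frac{4\sum_{h=0}^p\Big(W(h)\sum_{i,j=1}^{d_h}\sigma^h_{ij}\Big)}{\sum_{h=0}^p\Big(W(h)\sum_{j=1}^{d_h}\lambda_{hj}\Big)}\wedge 1 .$$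
   Context: Work in $L^2[0,1]$ with inner product $\langle x,y\rangle=\int_0^1x(t)y(t)\,dt$ and norm $\|x\|=\langle x,x\rangle^{1/2}$. For an operator $\Phi$ on $L^2[0,1]$, the Hilbert–Schmidt norm is $\|\Phi\|_{\mathcal{S}}^2=\sum_{i,j}\langle\Phi(e_i),e_j\rangle^2$ for any orthonormal basis $(e_i)$. For each group $g\in\{0,1\}$, $\{X_k^{(g)}\colon k\ge1\}$ is a weakly stationary sequence of random functions in $L^2[0,1]$ with mean function zero. For $h\in\mathbb{N}$ the lag-$h$ (auto-)covariance operators are $C_g^{(h)}(\cdot)=E\{X_k^{(g)}\langle X_{k+h}^{(g)},\cdot\rangle\}$ and $C_g^{(-h)}(\cdot)=E\{X_{k+h}^{(g)}\langle X_k^{(g)},\cdot\rangle\}$, and $\kappa_g^{(h)}=C_g^{(h)}+C_g^{(-h)}$. Let $\mathcal{R}_h=(\kappa_0^{(h)}-\kappa_1^{(h)})^2$, with spectral decomposition $\mathcal{R}_h(\cdot)=\sum_{j\ge1}\lambda_{hj}\langle\nu_{h,j},\cdot\rangle\nu_{h,j}$, $\lambda_{h1}>\lambda_{h2}>\cdots\ge 0$, $\{\nu_{h,j}\}_j$ orthonormal (the discriminative feature functions of lag $h$). A set of consecutive functions $Y_1,\dots,Y_{p+1}$ ''from group $\Pi_g$'' means they are consecutive elements of a process with the same law as $\{X_k^{(g)}\}$. For $0\le h\le p$ define $$\hat\kappa_{y,h}(\cdot)=\frac{1}{p+1-h}\sum_{k=1}^{p+1-h}\Big(Y_k\langle Y_{k+h},\cdot\rangle+Y_{k+h}\langle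 Y_k,\cdot\rangle\Big),$$ $y^h_{ij}=\langle\hat\kappa_{y,h}(\nu_{h,i}),\nu_{h,j}\rangle$, and $\sigma^h_{ij}=E\{y^h_{ij}-\langle\kappa_g^{(h)}(\nu_{h,i}),\nu_{h,j}\rangle\}^2$ (expectation when the $Y_k$ come from group $g$). The oracle classifier computes, for $g'=0,1$, $D_{g'}=\sum_{h=0}^pW(h)\sum_{i,j=1}^{d_h}\big(\langle\kappa^{(h)}_{g'}(\nu_{h,i}),\nu_{h,j}\rangle-y^h_{ij}\big)^2$ and assigns $Y_1,\dots,Y_{p+1}$ to $\Pi_0$ if $D_0-D_1<0$ and to $\Pi_1$ otherwise. $P(\Pi_{1-g}\mid\Pi_g,\cdot)$ denotes the probability that functions from group $\Pi_g$ are assigned to $\Pi_{1-g}$. $a\wedge b=\min(a,b)$. *)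

(* Defs.v *)
From HB Require Import structures.
From mathcomp Require Import all_boot all_order all_algebra.
From mathcomp Require Import all_classical all_reals all_analysis.
Import Order.TTheory GRing.Theory Num.Theory numFieldNormedType.Exports.
Set Implicit Arguments. Unset Strict Implicit. Unset Printing Implicit Defensive.
Local Open Scope classical_set_scope.
Local Open Scope ring_scope.

(* Elements of L^2[0,1] are represented by functions R -> R (inner products
   only see them up to a.e. equality on [0,1]). *)

Definition I01 (R : realType) : set R := `[(0:R), (1:R)].

Definition ip (R : realType) (x y : R -> R) : R :=
  Rintegral (@lebesgue_measure R) (@I01 R) (fun t => x t * y t).

Definition l2norm (R : realType) (x : R -> R) : R := Num.sqrt (ip x x).

Definition L2 (R : realType) (x : R -> R) : Prop :=
  measurable_fun (@I01 R) x /\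
  (@lebesgue_measure R).-integrable (@I01 R) (fun t => ((x t) ^+ 2)%:E).

Definition orthonormal (R : realType) (e : nat -> R -> R) : Prop :=
  (forall i, L2 (e i)) /\ (forall i j, ip (e i) (e j) = (i == j)%:R).

Definition ONB (R : realType) (e : nat -> R -> R) : Prop :=
  orthonormal e /\
  forall x, L2 x ->
    (fun n : nat => l2norm (fun t => x t - \sum_(i < n) ip (e i) x * e i t))
      @ \oo --> (0:R)%R.

Definition hs_sq (R : realType) (Phi : (R -> R) -> (R -> R)) (e : nat -> R -> R)
  : \bar R :=
  (\sum_(0 <= i <oo) \sum_(0 <= j <oo) (((ip (Phi (e i)) (e j)) ^+ 2)%:E))%E.

(* Index j = 0 here is
   the paper's j = 1. *)
Definition spectral_decomp (R : realType) (Phi : (R -> R) -> (R -> R))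
  (lam : nat -> R) (nu : nat -> R -> R) : Prop :=
  orthonormal nu /\
  (forall j, 0 <= lam j) /\
  (forall j, lam j.+1 <= lam j) /\
  (forall j, 0 < lam j.+1 -> lam j.+1 < lam j) /\
  forall x, L2 x ->
    (fun n : nat => l2norm (fun t => Phi x t - \sum_(j < n) lam j * ip (nu j) x * nu j t))
      @ \oo --> (0:R)%R.

(* Delta_h = kappa_0^(h) - kappa_1^(h), groups indexed by bool (false = Pi_0) *)
Definition Delta (R : realType) (K : bool -> nat -> (R -> R) -> (R -> R)) (h : nat)
  (x : R -> R) : R -> R := fun t => K false h x t - K true h x t.

Definition Rop (R : realType) (K : bool -> nat -> (R -> R) -> (R -> R)) (h : nat)
  (x : R -> R) : R -> R := Delta K h (Delta K h x).

(* y^h_{ij} = < hat kappa_{y,h}(nu_{h,i}), nu_{h,j} >, for Y_1..Y_{p+1} *)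
Definition yhat (R : realType) (p : nat) (Y : nat -> R -> R) (nu : nat -> nat -> R -> R)
  (h i j : nat) : R :=
  ((p.+1 - h)%:R)^-1 *
  \sum_(1 <= k < (p.+1 - h).+1)
     (ip (Y k) (nu h j) * ip (Y (k + h)%N) (nu h i)
      + ip (Y (k + h)%N) (nu h j) * ip (Y k) (nu h i)).

Definition kap (R : realType) (K : bool -> nat -> (R -> R) -> (R -> R))
  (nu : nat -> nat -> R -> R) (g : bool) (h i j : nat) : R :=
  ip (K g h (nu h i)) (nu h j).

Definition Dstat (R : realType) (p : nat) (W : nat -> R) (d : nat -> nat)
  (K : bool -> nat -> (R -> R) -> (R -> R)) (nu : nat -> nat -> R -> R)
  (Y : nat -> R -> R) (g' : bool) : R :=
  \sum_(h < p.+1) W h * \sum_(i < d h) \sum_(j < d h)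
     (kap K nu g' h i j - yhat p Y nu h i j) ^+ 2.

(* Main.v *)
Set Warnings "-notation-overridden,-ambiguous-paths,-notation-incompatible-prefix".
Require Import Defs.
From HB Require Import structures.
From mathcomp Require Import all_boot all_order all_algebra.
From mathcomp Require Import all_classical all_reals all_analysis.
From mathcomp Require Import ring lra measurable_realfun.
Import Order.TTheory GRing.Theory Num.Theory numFieldNormedType.Exports.
Local Open Scope classical_set_scope.
Local Open Scope ring_scope.

Section L2facts.
Context {R : realType}.
Implicit Types x y z : R -> R.

Lemma mI01 : measurable (@I01 R).
Proof. exact: measurable_itv. Qed.

Lemma L2_ext {x y} : L2 x -> x = y -> L2 y.
Proof. by move=> h <-. Qed.

Lemma L2_prod_int {x y} : L2 x -> L2 y ->
  (@lebesgue_measure R).-integrable (@I01 R) (EFin \o (fun t => x t * y t)).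
Proof.
move=> [mx ix] [my iy].
apply: (@le_integrable _ _ _ (@lebesgue_measure R) _ mI01 _ (fun t => ((x t ^+ 2)%:E + (y t ^+ 2)%:E)%E)).
- by apply/measurable_EFinP; exact: measurable_funM.
- move=> t _ /=; rewrite ?abse_EFin lee_fin (@ger0_norm _ (x t ^+ 2 + y t ^+ 2)); last first.
    by apply: addr_ge0; exact: sqr_ge0.
  have [h|h] := lerP 0 (x t * y t).
    by rewrite ger0_norm // !expr2; nra.
  by rewrite ltr0_norm // !expr2; nra.
- by apply: (integrableD _ ix iy); exact: measurable_itv.
Qed.

Lemma L2_lin a b {x y} : L2 x -> L2 y -> L2 (fun t => a * x t + b * y t).
Proof.
move=> [mx ix] [my iy]; split.
  by apply: measurable_funD; apply: measurable_funM => //; exact: measurable_cst.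
apply: (@le_integrable _ _ _ (@lebesgue_measure R) _ _ _ (fun t => ((2 * a ^+ 2)%:E * (x t ^+ 2)%:E
                              + (2 * b ^+ 2)%:E * (y t ^+ 2)%:E)%E)).
- exact: measurable_itv.
- apply/measurable_EFinP; under eq_fun do rewrite expr2; apply: measurable_funM;
  by apply: measurable_funD; apply: measurable_funM => //; exact: measurable_cst.
- move=> t _ /=; rewrite -?EFinM -?EFinD ?abse_EFin lee_fin ger0_norm; last first.
    exact: sqr_ge0.
  have h1 := sqr_ge0 (a * x t - b * y t).
  have h2 := sqr_ge0 (a * x t).
  have h3 := sqr_ge0 (b * y t).
  rewrite ger0_norm; last first.
    rewrite !expr2 in h1 h2 h3 *; nra.
  rewrite !expr2 in h1 h2 h3 *; nra.
- apply: (integrableD _); first exact: measurable_itv.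
  + by apply: (integrableZl _); first exact: measurable_itv.
  + by apply: (integrableZl _); first exact: measurable_itv.
Qed.

Lemma L2_D {x y} : L2 x -> L2 y -> L2 (fun t => x t + y t).
Proof. by move=> hx hy; apply: (L2_ext (L2_lin 1 1 hx hy)); apply/funext => t; rewrite !mul1r. Qed.

Lemma L2_B {x y} : L2 x -> L2 y -> L2 (fun t => x t - y t).
Proof. by move=> hx hy; apply: (L2_ext (L2_lin 1 (-1) hx hy)); apply/funext => t; rewrite mul1r mulN1r. Qed.

Lemma L2_Z a {x} : L2 x -> L2 (fun t => a * x t).
Proof. by move=> hx; apply: (L2_ext (L2_lin a 0 hx hx)); apply/funext => t; rewrite mul0r addr0. Qed.

Lemma Rint_ext (f g : R -> R) : (forall t, f t = g t) ->
  Rintegral (@lebesgue_measure R) (@I01 R) f = Rintegral (@lebesgue_measure R) (@I01 R) g.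
Proof. by move=> h; congr Rintegral; apply/funext. Qed.

Lemma int_ext (f g : R -> R) : (forall t, f t = g t) ->
  (@lebesgue_measure R).-integrable (@I01 R) (EFin \o f) ->
  (@lebesgue_measure R).-integrable (@I01 R) (EFin \o g).
Proof. by move=> h; have -> : f = g by apply/funext. Qed.

Lemma ip_sym x y : ip x y = ip y x.
Proof. by rewrite /ip; apply: eq_Rintegral => t _; rewrite mulrC. Qed.

Lemma ip_ge0 x : 0 <= ip x x.
Proof. by apply: Rintegral_ge0 => t _; rewrite -expr2 sqr_ge0. Qed.

Lemma ip_lin a b {x y z} : L2 x -> L2 y -> L2 z ->
  ip (fun t => a * x t + b * y t) z = a * ip x z + b * ip y z.
Proof.
move=> hx hy hz; rewrite /ip.
rewrite (@Rint_ext _ (fun t => a * (x t * z t) + b * (y t * z t))); last first.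
  by move=> t; rewrite mulrDl !mulrA.
have ixz := L2_prod_int hx hz.
have iyz := L2_prod_int hy hz.
have i1 : (@lebesgue_measure R).-integrable (@I01 R) (EFin \o (fun t => a * (x t * z t))).
  by apply: (int_ext _ _ _ (L2_prod_int (L2_Z a hx) hz)) => t; rewrite mulrA.
have i2 : (@lebesgue_measure R).-integrable (@I01 R) (EFin \o (fun t => b * (y t * z t))).
  by apply: (int_ext _ _ _ (L2_prod_int (L2_Z b hy) hz)) => t; rewrite mulrA.
rewrite RintegralD; [|exact: measurable_itv|exact: i1|exact: i2].
rewrite RintegralZl; [|exact: measurable_itv|exact: ixz].
rewrite RintegralZl; [|exact: measurable_itv|exact: iyz].
by [].
Qed.

Lemma ip_B {x y z} : L2 x -> L2 y -> L2 z ->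
  ip (fun t => x t - y t) z = ip x z - ip y z.
Proof.
move=> hx hy hz; have := ip_lin 1 (-1) hx hy hz.
rewrite !mul1r mulN1r => <-; congr ip; apply/funext => t; by rewrite mul1r mulN1r.
Qed.

Lemma ip_Z a {x z} : L2 x -> L2 z -> ip (fun t => a * x t) z = a * ip x z.
Proof.
move=> hx hz; have := ip_lin a 0 hx hx hz.
rewrite mul0r addr0 => <-; congr ip; apply/funext => t; by rewrite mul0r addr0.
Qed.

Lemma ip_null {z y} : L2 z -> L2 y -> ip z z = 0 -> ip z y = 0.
Proof.
move=> hz hy hzz.
set a := ip z y; set b := ip y y.
have b0 : 0 <= b by exact: ip_ge0.
have key : forall s, 0 <= 2 * s * a + s ^+ 2 * b.
  move=> s; have := ip_ge0 (fun t => 1 * z t + s * y t).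
  have hw := L2_lin 1 s hz hy.
  rewrite ip_lin // [ip z _]ip_sym [ip y _]ip_sym !ip_lin // hzz.
  rewrite -/b [ip y z]ip_sym -/a.
  move=> h; apply: (le_trans h); rewrite le_eqVlt; apply/orP; left; apply/eqP; ring.
have := key (- a / (b + 1)).
set s := (- a / (b + 1)).
have hb1 : 0 < b + 1 by lra.
have hs : s * (b + 1) = - a by rewrite /s mulfVK // gt_eqF.
move=> h.
have h2 : 0 <= (2 * s * a + s ^+ 2 * b) * (b + 1) by apply: mulr_ge0 => //; lra.
have : 0 <= - a ^+ 2 * (b + 2).
  suff -> : - a ^+ 2 * (b + 2) = (2 * s * a + s ^+ 2 * b) * (b + 1) * (b+1) by apply: mulr_ge0 => //; lra.
  have -> : a = - (s * (b + 1)) by rewrite hs opprK.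
  ring.
move=> h3; apply/eqP; rewrite -sqrf_eq0 eq_le sqr_ge0 andbT.
rewrite expr2 in h3 *; nra.
Qed.

Lemma l2norm0 x : l2norm x = 0 -> ip x x = 0.
Proof.
move=> /eqP; rewrite /l2norm sqrtr_eq0 => h; apply/eqP; rewrite eq_le h ip_ge0.
by [].
Qed.

Lemma cvg_evconst (u : nat -> R) c N :
  u @ \oo --> (0:R) -> (forall n, (N <= n)%N -> u n = c) -> c = 0.
Proof.
move=> hu hc.
have hc' : u @ \oo --> c.
  apply: cvg_near_cst; exists N => // n /= hn; exact: hc.
exact: (cvg_unique _ hc' hu).
Qed.

End L2facts.

Lemma sum_single (R : realType) (c f : nat -> R) j n : (j < n)%N ->
  (forall k, k != j -> c k = 0) -> \sum_(k < n) c k * f k = c j * f j.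
Proof.
move=> hj hc.
rewrite (bigD1 (Ordinal hj)) //= big1 ?addr0 // => k hk.
rewrite hc ?mul0r //; apply: contra hk => /eqP hk; apply/eqP; exact: val_inj.
Qed.

Section Ops.
Variable R : realType.
Variable K : bool -> nat -> (R -> R) -> (R -> R).
Hypothesis HKL2 : forall g h u, L2 u -> L2 (K g h u).
Hypothesis Ksym : forall g h u v, L2 u -> L2 v -> ip (K g h u) v = ip (K g h v) u.
Variable h : nat.
Variables (lam : nat -> R) (nu : nat -> R -> R).
Hypothesis Hsp : spectral_decomp (Rop K h) lam nu.

Local Notation Dl := (Delta K h).
Local Notation Rl := (Rop K h).

Lemma L2_Delta {u} : L2 u -> L2 (Dl u).
Proof. by move=> hu; apply: L2_B; apply: HKL2. Qed.

Lemma L2_Rop {u} : L2 u -> L2 (Rl u).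
Proof. by move=> hu; apply: L2_Delta; apply: L2_Delta. Qed.

Lemma ipDelta u v : L2 u -> L2 v ->
  ip (Dl u) v = ip (K false h u) v - ip (K true h u) v.
Proof. by move=> hu hv; rewrite /Delta ip_B //; apply: HKL2. Qed.

Lemma Dsym u v : L2 u -> L2 v -> ip (Dl u) v = ip (Dl v) u.
Proof. by move=> hu hv; rewrite !ipDelta // Ksym // [ip (K true _ _) _]Ksym. Qed.

Lemma nuL2 j : L2 (nu j).
Proof. by case: Hsp => [[hL _] _]. Qed.

Lemma nu_on i j : ip (nu i) (nu j) = (i == j)%:R.
Proof. by case: Hsp => [[_ hL] _]. Qed.

Lemma spec_single x j : L2 x -> (forall k, k != j -> ip (nu k) x = 0) ->
  forall y, L2 y -> ip (Rl x) y = lam j * ip (nu j) x * ip (nu j) y.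
Proof.
move=> hx hk y hy.
case: Hsp => [_ [_ [_ [_ hcv]]]].
have := hcv x hx.
set F := fun t => Rl x t - lam j * ip (nu j) x * nu j t.
have hF : L2 F by apply: L2_B; [exact: L2_Rop | apply: L2_Z; exact: nuL2].
move=> hc.
have hF0 : l2norm F = 0.
  apply: (@cvg_evconst R _ _ j.+1 hc) => n hn.
  congr l2norm; apply/funext => t.
  rewrite (@sum_single _ (fun k => lam k * ip (nu k) x) (fun k => nu k t) j n) //.
  by move=> k hkj /=; rewrite hk // mulr0.
have := ip_null hF hy (l2norm0 _ hF0).
rewrite /F ip_B //; last 2 first.
- exact: L2_Rop.
- by apply: L2_Z; exact: nuL2.
rewrite ip_Z //; last exact: nuL2.
by move/eqP; rewrite subr_eq0 => /eqP ->.
Qed.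

Lemma eig1 j y : L2 y -> ip (Rl (nu j)) y = lam j * ip (nu j) y.
Proof.
move=> hy; rewrite (@spec_single (nu j) j) //.
- by rewrite nu_on eqxx mulr1.
- exact: nuL2.
- by move=> k hk; rewrite nu_on (negbTE hk).
Qed.

Lemma E3 j : ip (Dl (nu j)) (Dl (nu j)) = lam j.
Proof.
have hj := nuL2 j.
rewrite -Dsym; try exact: L2_Delta.
rewrite -[Dl (Dl _)]/(Rl _) eig1 // nu_on eqxx mulr1. all: by [].
Qed.

Lemma E4 j k : lam k * ip (Dl (nu j)) (nu k) = lam j * ip (Dl (nu j)) (nu k).
Proof.
have hj := nuL2 j; have hk := nuL2 k.
have hDj := L2_Delta hj; have hDk := L2_Delta hk.
rewrite {1}ip_sym -eig1 // /Rop Dsym; try exact: L2_Delta.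
rewrite -[Dl (Dl (nu j))]/(Rl (nu j)) eig1 // ip_sym Dsym //.
Qed.

Lemma lam_ge0 j : 0 <= lam j.
Proof. by case: Hsp => [_ [hh0 _]]. Qed.

Lemma lam_mono j k : (j <= k)%N -> lam k <= lam j.
Proof.
case: Hsp => [_ [_ [hd _]]].
move=> /subnK <-; elim: (k - j)%N => [|n ih]; first by rewrite add0n.
by rewrite addSn; apply: le_trans (hd _) ih.
Qed.

Lemma lam_lt j k : (j < k)%N -> 0 < lam k -> lam k < lam j.
Proof.
case: Hsp => [_ [_ [_ [hs _]]]].
move=> hjk hk.
have h1 : lam k <= lam j.+1 by apply: lam_mono.
have h2 : 0 < lam j.+1 by exact: lt_le_trans hk h1.
exact: le_lt_trans h1 (hs _ h2).
Qed.

Lemma lam_neq j k : 0 < lam j -> j != k -> lam k != lam j.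
Proof.
move=> hj hjk; case: (ltngtP j k) => [e|e|e].
- have [hk|hk] := lerP (lam k) 0.
    by apply/eqP => ee; move: hj; rewrite -ee ltNge hk.
  by rewrite lt_eqF // lam_lt.
- by rewrite gt_eqF // lam_lt.
- by move: hjk; rewrite e eqxx.
Qed.

Lemma E5 j k : j != k -> ip (Dl (nu j)) (nu k) = 0.
Proof.
move=> hjk.
have hj := nuL2 j; have hk := nuL2 k.
have [hl|hl] := lerP (lam j) 0.
  have e : lam j = 0 by apply/eqP; rewrite eq_le hl lam_ge0.
  by apply: ip_null => //; [exact: L2_Delta | rewrite E3].
have := E4 j k; move/eqP; rewrite -subr_eq0 -mulrBl mulf_eq0 subr_eq0.
by rewrite (negbTE (lam_neq j k hl hjk)) => /eqP.
Qed.

Lemma E6 j : ip (Dl (nu j)) (nu j) ^+ 2 = lam j.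
Proof.
have hj := nuL2 j; have hDj := L2_Delta hj.
have [hl|hl] := lerP (lam j) 0.
  have e : lam j = 0 by apply/eqP; rewrite eq_le hl lam_ge0.
  by rewrite e (ip_null hDj hj) ?expr0n // E3.
set z := Dl (nu j).
have hz : forall y, L2 y -> ip (Rl z) y = lam j * ip z y.
  move=> y hy.
  rewrite /z -[Rl (Dl (nu j))]/(Dl (Rl (nu j))) Dsym //; last exact: L2_Rop.
  rewrite ip_sym eig1 //; last exact: L2_Delta.
  by rewrite ip_sym Dsym.
have := @spec_single z j hDj.
have hk : forall k, k != j -> ip (nu k) z = 0.
  by move=> k hk; rewrite ip_sym E5 // eq_sym.
move=> /(_ hk z hDj); rewrite hz // -mulrA => /(mulfI (negbT (gt_eqF hl))).
by rewrite /z E3 [ip (nu j) _]ip_sym expr2.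
Qed.

Lemma sum_a d :
  \sum_(i < d) \sum_(j < d) ip (Dl (nu i)) (nu j) ^+ 2 = \sum_(j < d) lam j.
Proof.
apply: eq_bigr => i _.
rewrite (bigD1 i) //= big1 ?addr0; first exact: E6.
by move=> k hk; rewrite E5 ?expr0n //; apply: contra hk => /eqP e; apply/eqP/val_inj.
Qed.

Lemma lam_all0 : lam 0%N = 0 -> forall x, L2 x -> forall y, L2 y -> ip (Rl x) y = 0.
Proof.
move=> h0 x hx y hy.
have hl : forall k, lam k = 0.
  by move=> k; apply/eqP; rewrite eq_le lam_ge0 andbT -h0 lam_mono.
case: Hsp => [_ [_ [_ [_ hcv]]]].
have hF0 : l2norm (Rl x) = 0.
  apply: (@cvg_evconst R _ _ 0%N (hcv x hx)) => n _.
  congr l2norm; apply/funext => t.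
  by rewrite big1 ?subr0 // => k _; rewrite hl !mul0r.
exact: ip_null (L2_Rop hx) hy (l2norm0 _ hF0).
Qed.

End Ops.

Definition Phi (R : realType) (p : nat) (W : nat -> R) (d : nat -> nat)
  (F : nat -> nat -> nat -> R) : R :=
  \sum_(h < p.+1) W h * \sum_(i < d h) \sum_(j < d h) F h i j.
Arguments Phi {R}.

Lemma Phi_lin (R : realType) p W d (a b : R) F G :
  Phi p W d (fun h i j => a * F h i j + b * G h i j)
  = a * Phi p W d F + b * Phi p W d G.
Proof.
rewrite /Phi !mulr_sumr -big_split; apply: eq_bigr => h _ /=.
rewrite mulrCA [b * _]mulrCA -mulrDr; congr (_ * _).
rewrite !mulr_sumr -big_split; apply: eq_bigr => i _ /=.
by rewrite !mulr_sumr -big_split.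
Qed.

Lemma Phi_le (R : realType) p (W : nat -> R) d F G :
  (forall h, (h <= p)%N -> 0 <= W h) ->
  (forall h i j, F h i j <= G h i j) -> Phi p W d F <= Phi p W d G.
Proof.
move=> hW hFG; rewrite /Phi; apply: ler_sum => h _.
apply: ler_wpM2l; first by apply: hW; rewrite -ltnS.
by apply: ler_sum => i _; apply: ler_sum => j _.
Qed.

Lemma key_false (R : realType) p (W : nat -> R) d (a0 a1 y : nat -> nat -> nat -> R) :
  (forall h, (h <= p)%N -> 0 <= W h) ->
  0 <= Phi p W d (fun h i j => (a0 h i j - y h i j) ^+ 2)
       - Phi p W d (fun h i j => (a1 h i j - y h i j) ^+ 2) ->
  Phi p W d (fun h i j => (a0 h i j - a1 h i j) ^+ 2) / 4
  <= Phi p W d (fun h i j => (y h i j - a0 h i j) ^+ 2).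
Proof.
move=> hW h0.
have e1 := @Phi_lin R p W d 1 (-1) (fun h i j => (a0 h i j - y h i j) ^+ 2)
                               (fun h i j => (a1 h i j - y h i j) ^+ 2).
have e2 := @Phi_lin R p W d (- (1/2)) 2 (fun h i j => (a0 h i j - a1 h i j) ^+ 2)
                               (fun h i j => (y h i j - a0 h i j) ^+ 2).
have hle := @Phi_le R p W d (fun h i j => 1 * (a0 h i j - y h i j) ^+ 2
                                          + -1 * (a1 h i j - y h i j) ^+ 2)
    (fun h i j => - (1/2) * (a0 h i j - a1 h i j) ^+ 2 + 2 * (y h i j - a0 h i j) ^+ 2) hW.
rewrite e1 e2 in hle.
have pw : forall h i j, 1 * (a0 h i j - y h i j) ^+ 2 + -1 * (a1 h i j - y h i j) ^+ 2 <=
     - (1/2) * (a0 h i j - a1 h i j) ^+ 2 + 2 * (y h i j - a0 h i j) ^+ 2.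
  move=> h i j.
  have := sqr_ge0 ((a0 h i j - a1 h i j) + 2 * (y h i j - a0 h i j)).
  rewrite !expr2 => hs; nra.
have := hle pw; lra.
Qed.

Lemma key_true (R : realType) p (W : nat -> R) d (a0 a1 y : nat -> nat -> nat -> R) :
  (forall h, (h <= p)%N -> 0 <= W h) ->
  Phi p W d (fun h i j => (a0 h i j - y h i j) ^+ 2)
       - Phi p W d (fun h i j => (a1 h i j - y h i j) ^+ 2) < 0 ->
  Phi p W d (fun h i j => (a0 h i j - a1 h i j) ^+ 2) / 4
  <= Phi p W d (fun h i j => (y h i j - a1 h i j) ^+ 2).
Proof.
move=> hW h0.
have e1 := @Phi_lin R p W d 1 (-1) (fun h i j => (a0 h i j - y h i j) ^+ 2)
                               (fun h i j => (a1 h i j - y h i j) ^+ 2).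
have e2 := @Phi_lin R p W d (1/2) (-2) (fun h i j => (a0 h i j - a1 h i j) ^+ 2)
                               (fun h i j => (y h i j - a1 h i j) ^+ 2).
have hle := @Phi_le R p W d
    (fun h i j => 1/2 * (a0 h i j - a1 h i j) ^+ 2 + -2 * (y h i j - a1 h i j) ^+ 2)
    (fun h i j => 1 * (a0 h i j - y h i j) ^+ 2
                                          + -1 * (a1 h i j - y h i j) ^+ 2) hW.
rewrite e1 e2 in hle.
have pw : forall h i j, 1/2 * (a0 h i j - a1 h i j) ^+ 2 + -2 * (y h i j - a1 h i j) ^+ 2 <=
     1 * (a0 h i j - y h i j) ^+ 2 + -1 * (a1 h i j - y h i j) ^+ 2.
  move=> h i j.
  have := sqr_ge0 ((a0 h i j - a1 h i j) - 2 * (y h i j - a1 h i j)).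
  rewrite !expr2 => hs; nra.
have := hle pw; lra.
Qed.

Theorem theorem1
  (R : realType) (dT : measure_display) (T : measurableType dT)
  (P : probability T R)
  (X : bool -> nat -> T -> R -> R)
  (K : bool -> nat -> (R -> R) -> (R -> R))
  (nu : nat -> nat -> R -> R) (lam : nat -> nat -> R)
  (p : nat) (d : nat -> nat) (W : nat -> R) (g : bool) (m : nat)
  (* each X_k^(g') is a random element of L^2[0,1] *)
  (HX_L2 : forall g' k w, L2 (X g' k w))
  (HX_meas : forall g' k u, L2 u -> measurable_fun setT (fun w => ip (X g' k w) u))
  (* mean function zero *)
  (Hmean : forall g' k u, L2 u ->
     (\int[P]_w (ip (X g' k w) u)%:E = 0)%E)
  (* weak stationarity *)
  (Hstat : forall g' k h u v, L2 u -> L2 v ->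
     (\int[P]_w (ip (X g' k w) u * ip (X g' (k + h)%N w) v)%:E
      = \int[P]_w (ip (X g' 0%N w) u * ip (X g' h w) v)%:E)%E)
  (* E ||X_k^(g')||^4 < oo *)
  (H4 : forall g' k, (\int[P]_w ((l2norm (X g' k w)) ^+ 4)%:E < +oo)%E)
  (* kappa_{g'}^{(h)} = C^{(h)} + C^{(-h)}, defined weakly *)
  (HK_L2 : forall g' h u, L2 u -> L2 (K g' h u))
  (HK : forall g' h k u v, L2 u -> L2 v ->
     ((ip (K g' h u) v)%:E
      = \int[P]_w (ip (X g' k w) v * ip (X g' (k + h)%N w) u
                   + ip (X g' (k + h)%N w) v * ip (X g' k w) u)%:E)%E)
  (* spectral decomposition of R_h : discriminative feature functions *)
  (Hspec : forall h, (h <= p)%N -> spectral_decomp (Rop K h) (lam h) (nu h))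
  (* some lag h <= p with ||R_h||_S > 0 *)
  (HRpos : exists2 h, (h <= p)%N &
     exists e, ONB e /\ (0 < hs_sq (Rop K h) e)%E)
  (Hd : forall h, (h <= p)%N -> (0 < d h)%N)
  (HW : forall h, (h <= p)%N -> 0 < W h) :
  let Y (w : T) (k : nat) := X g (m + k)%N w in
  let D (w : T) (g' : bool) := Dstat p W d K nu (Y w) g' in
  let misclass :=
    if g then [set w | D w false - D w true < 0]
    else [set w | 0 <= D w false - D w true] in
  let sigma (h i j : nat) :=
    (\int[P]_w ((yhat p (Y w) nu h i j - kap K nu g h i j) ^+ 2)%:E)%E in
  (P misclass <=
     Order.min
       (4%:E * (\sum_(h < p.+1) (W h)%:E * \sum_(i < d h) \sum_(j < d h) sigma h i j)
        * ((\sum_(h < p.+1) W h * \sum_(j < d h) lam h j)^-1)%:E)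
       1)%E.
Proof.
pose Y (w : T) (k : nat) := X g (m + k)%N w.
pose D (w : T) (g' : bool) := Dstat p W d K nu (Y w) g'.
pose misclass :=
    if g then [set w | D w false - D w true < 0]
    else [set w | 0 <= D w false - D w true].
pose sigma (h i j : nat) :=
    (\int[P]_w ((yhat p (Y w) nu h i j - kap K nu g h i j) ^+ 2)%:E)%E.
change (P misclass <=
     Order.min
       (4%:E * (\sum_(h < p.+1) (W h)%:E * \sum_(i < d h) \sum_(j < d h) sigma h i j)
        * ((\sum_(h < p.+1) W h * \sum_(j < d h) lam h j)^-1)%:E)
       1)%E.
have Ksym : forall g' h u v, L2 u -> L2 v -> ip (K g' h u) v = ip (K g' h v) u.
  move=> g' h u v hu hv; apply: EFin_inj.
  rewrite (HK g' h 0%N u v hu hv) (HK g' h 0%N v u hv hu).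
  apply: eq_integral => w _; congr EFin; rewrite addrC.
  by congr (_ + _); apply: mulrC.
have nuL : forall h i, (h <= p)%N -> L2 (nu h i).
  by move=> h i hh; exact: (@nuL2 R K h (lam h) (nu h) (Hspec h hh) i).
have HW' : forall h, (h <= p)%N -> 0 <= W h by move=> h hh; apply: ltW; exact: HW.
pose S := Phi p W d (fun h i j => (kap K nu false h i j - kap K nu true h i j) ^+ 2).
pose Den := \sum_(h < p.+1) W h * \sum_(j < d h) lam h j.
have SDen : S = Den.
  rewrite /S /Phi /Den; apply: eq_bigr => -[h hh] _ /=; congr (_ * _).
  rewrite ltnS in hh.
  rewrite -(@sum_a R K HK_L2 Ksym h (lam h) (nu h) (Hspec h hh) (d h)).
  apply: eq_bigr => i _; apply: eq_bigr => j _.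
  by rewrite /kap (@ipDelta R K HK_L2 h) //; apply: nuL.
have Den_pos : 0 < Den.
  case: HRpos => h0 hh0 [eb [hONB hpos]].
  have hs := Hspec h0 hh0.
  have l0 : 0 < lam h0 0%N.
    rewrite lt_def (@lam_ge0 R K h0 (lam h0) (nu h0) hs 0%N) andbT.
    apply/negP => /eqP e0.
    have ebL : forall i, L2 (eb i) by case: hONB => [[he _] _].
    have : hs_sq (Rop K h0) eb = 0%E.
      rewrite /hs_sq eseries0 // => i _ _; rewrite eseries0 // => j _ _.
      by rewrite (@lam_all0 R K HK_L2 h0 (lam h0) (nu h0) hs e0 (eb i) (ebL i) (eb j) (ebL j)) expr2 mulr0.
    by move=> e; move: hpos; rewrite e ltxx.
  have hh0' : (h0 < p.+1)%N by rewrite ltnS.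
  rewrite /Den (bigD1 (Ordinal hh0')) //=.
  have t1 : 0 < W h0 * \sum_(j < d h0) lam h0 j.
    apply: mulr_gt0; first exact: HW.
    rewrite (bigD1 (Ordinal (Hd h0 hh0))) //=.
    apply: (lt_le_trans l0); rewrite lerDl; apply: sumr_ge0 => j _.
    exact: (@lam_ge0 R K h0 (lam h0) (nu h0) hs).
  apply: (lt_le_trans t1); rewrite lerDl; apply: sumr_ge0 => i _.
  have hi : (i <= p)%N by rewrite -ltnS.
  apply: mulr_ge0; first exact: HW'.
  apply: sumr_ge0 => j _; exact: (@lam_ge0 R K i (lam i) (nu i) (Hspec i hi)).
pose Q := fun w => Phi p W d (fun h i j => (yhat p (Y w) nu h i j - kap K nu g h i j) ^+ 2).
have key : forall w, misclass w -> S / 4 <= Q w.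
  move=> w; rewrite /misclass; case: ifP => Eg hw; rewrite /Q Eg.
  - exact: (@key_true R p W d (kap K nu false) (kap K nu true) (fun h i j => yhat p (Y w) nu h i j) HW' hw).
  - exact: (@key_false R p W d (kap K nu false) (kap K nu true) (fun h i j => yhat p (Y w) nu h i j) HW' hw).
have mip : forall k h i, (h <= p)%N -> measurable_fun setT (fun w => ip (Y w k) (nu h i)).
  by move=> k h i hh; apply: HX_meas; apply: nuL.
have myhat : forall h i j, (h <= p)%N -> measurable_fun setT (fun w => yhat p (Y w) nu h i j).
  move=> h i j hh; rewrite /yhat.
  apply: measurable_funM; first exact: measurable_cst.
  apply: measurable_sum => k.
  by apply: measurable_funD; apply: measurable_funM; apply: mip.
have mPhi : forall F : T -> nat -> nat -> nat -> R,
    (forall h i j, (h <= p)%N -> measurable_fun setT (fun w => F w h i j)) ->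
    measurable_fun setT (fun w => Phi p W d (F w)).
  move=> F hF; rewrite /Phi; apply: measurable_sum => h.
  apply: measurable_funM; first exact: measurable_cst.
  apply: measurable_sum => i; apply: measurable_sum => j.
  by apply: hF; rewrite -ltnS.
have mQ : measurable_fun setT Q.
  apply: mPhi => h i j hh; apply: measurable_funX.
  by apply: measurable_funB; [exact: myhat | exact: measurable_cst].
have mDf : forall g', measurable_fun setT (fun w => D w g').
  move=> g'; apply: (mPhi (fun w h i j => (kap K nu g' h i j - yhat p (Y w) nu h i j) ^+ 2)).
  move=> h i j hh; apply: measurable_funX.
  by apply: measurable_funB; [exact: measurable_cst | exact: myhat].
have mdiff : measurable_fun setT (fun w => D w false - D w true).
  by apply: measurable_funB; apply: mDf.
have mA : measurable misclass.
  rewrite /misclass; case: ifP => _.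
  - have := mdiff measurableT _ (measurable_itv `]-oo, 0[).
    rewrite setTI; congr measurable; apply/seteqP; split => w /=;
      by rewrite in_itv /=.
  - have := mdiff measurableT _ (measurable_itv `[0, +oo[).
    rewrite setTI; congr measurable; apply/seteqP; split => w /=;
      by rewrite in_itv /= andbT.
pose B := [set w | S / 4 <= Q w].
have mB : measurable B.
  have := mQ measurableT _ (measurable_itv `[S / 4, +oo[).
  rewrite setTI; congr measurable; apply/seteqP; split => w /=;
    by rewrite in_itv /= andbT.
have AB : misclass `<=` B by move=> w hw; exact: key.
have PAB : (P misclass <= P B)%E by apply: le_measure => //; rewrite inE.
have S0 : 0 < S / 4 by rewrite SDen divr_gt0.
have Q0 : forall w, 0 <= Q w.
  move=> w; rewrite /Q /Phi; apply: sumr_ge0 => h _; apply: mulr_ge0.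
    by apply: HW'; rewrite -ltnS.
  by apply: sumr_ge0 => i _; apply: sumr_ge0 => j _; exact: sqr_ge0.
have hPB : ((S / 4)%:E * P B <= \int[P]_w (Q w)%:E)%E.
  rewrite -integral_cst //.
  apply: (@le_trans _ _ (\int[P]_(w in B) (Q w)%:E)%E).
    apply: ge0_le_integral => //.
    all: try (by move=> w _; rewrite lee_fin ltW).
    all: try exact: measurable_cst.
    all: try (by apply/measurable_EFinP; apply: measurable_funS mQ).
    all: try (by move=> w hw; rewrite lee_fin).
  apply: ge0_subset_integral => //.
  all: try (by apply/measurable_EFinP).
  all: try (by move=> w _; rewrite lee_fin).
have EQ : (\int[P]_w (Q w)%:E
   = \sum_(h < p.+1) (W h)%:E * \sum_(i < d h) \sum_(j < d h) sigma h i j)%E.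
  have eqf : (fun w => (Q w)%:E) = (fun w => \sum_(h < p.+1)
       ((W h)%:E * \sum_(i < d h) \sum_(j < d h)
          ((yhat p (Y w) nu h i j - kap K nu g h i j) ^+ 2)%:E))%E.
    apply/funext => w; rewrite /Q /Phi -sumEFin; apply: eq_bigr => h _.
    by rewrite EFinM -sumEFin; congr (_ * _)%E; apply: eq_bigr => i _; rewrite sumEFin.
  rewrite eqf ge0_integral_sum //; last first.
  - move=> h w _; apply: mule_ge0; first by rewrite lee_fin; apply: HW'; rewrite -ltnS.
    by apply: sume_ge0 => i _; apply: sume_ge0 => j _; rewrite lee_fin sqr_ge0.
  - move=> h; apply: emeasurable_funM; first exact: measurable_cst.
    apply: emeasurable_sum => i; apply: emeasurable_sum => j.
    apply/measurable_EFinP; apply: measurable_funX.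
    by apply: measurable_funB; [apply: myhat; rewrite -ltnS | exact: measurable_cst].
  apply: eq_bigr => h _.
  have hh : (h <= p)%N by rewrite -ltnS.
  rewrite ge0_integralZl //; last 3 first.
  - apply: emeasurable_sum => i; apply: emeasurable_sum => j.
    apply/measurable_EFinP; apply: measurable_funX.
    by apply: measurable_funB; [apply: myhat | exact: measurable_cst].
  - by move=> w _; apply: sume_ge0 => i _; apply: sume_ge0 => j _; rewrite lee_fin sqr_ge0.
  - by rewrite lee_fin; apply: HW'.
  congr (_ * _)%E.
  rewrite ge0_integral_sum //; last first.
  - by move=> i w _; apply: sume_ge0 => j _; rewrite lee_fin sqr_ge0.
  - move=> i; apply: emeasurable_sum => j.
    apply/measurable_EFinP; apply: measurable_funX.
    by apply: measurable_funB; [apply: myhat | exact: measurable_cst].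
  apply: eq_bigr => i _.
  rewrite ge0_integral_sum //; last first.
  - by move=> j w _; rewrite lee_fin sqr_ge0.
  - move=> j; apply/measurable_EFinP; apply: measurable_funX.
    by apply: measurable_funB; [apply: myhat | exact: measurable_cst].
rewrite le_min; apply/andP; split; last by apply: probability_le1.
apply: (le_trans PAB).
rewrite -EQ.
have -> : P B = (((S / 4)^-1)%:E * ((S / 4)%:E * P B))%E.
  by rewrite muleA -EFinM mulVf ?gt_eqF // mul1e.
apply: (@le_trans _ _ (((S / 4)^-1)%:E * \int[P]_w (Q w)%:E)%E).
  by apply: lee_wpmul2l => //; rewrite lee_fin invr_ge0 ltW.
rewrite SDen invf_div EFinM muleAC.
by [].
Qed.
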